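(* Let \((Q, \preccurlyeq_{Q})\) be a totally ordered set with \(|Q| > 1\) having a smallest element \(q_0\). Then the following conditions are equivalent. (i) The order topology of \((Q,\preccurlyeq_Q)\) is second countable. (ii) For every \(\preccurlyeq_{Q}\)-pseudoultrametric \(d\) there is a pseudoultrametric \(\rho\) such that \(d\) and \(\rho\) are weakly similar. (iii) For every \(\preccurlyeq_{Q}\)-pseudoultrametric \(d\) there is a pseudoultrametric \(\rho\) such that \(d\) and \(\rho\) are combinatorially similar.
   Context: The order topology on a totally ordered \((Q,\preccurlyeq_Q)\) is the topology with subbase consisting of all sets \(\{q\in Q: q\prec_Q a\}\) and \(\{q\in Q: a\prec_Q q\}\), \(a\in Q\). A pseudoultrametric on \(Z\) is a symmetric \(\rho\colon Z^2\to[0,\infty)\) with \(\rho(z,z)=0\) and \(\rho(x,y)\le\max\{\rho(x,z),\rho(z,y)\}\); it is regarded as valued in the poset \(([0,\infty),\le)\). For a poset \((Q,\preccurlyeq_Q)\) with smallest element \(q_0\), \(d\colon X^2\to Q\) (\(X\) nonempty) is a \(\preccurlyeq_Q\)-pseudoultrametric if \(d\) is symmetric, \(d(x,x)=q_0\) for all \(x\), and for every triple \(\langle x_1,x_2,x_3\rangle\) in \(X\) there is a permutation \((i_1,i_2,i_3)\) of \((1,2,3)\) with \(d(x_{i_1},x_{i_3})\preccurlyeq_Q d(x_{i_1},x_{i_2})=d(x_{i_2},x_{i_3})\). For a \(\preccurlyeq_Q\)-valued \(d\) on \(X\) and a real-valued \(\rho\) on \(Y\): they are combinatorially similar if there are bijections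 \(h\colon X\to Y\) and \(f\colon d(X^2)\to\rho(Y^2)\) with \(\rho(h(x),h(y))=f(d(x,y))\) for all \(x,y\in X\); they are weakly similar if this holds with \(f\) moreover an order isomorphism between the subposet \(d(X^2)\) of \((Q,\preccurlyeq_Q)\) and the subposet \(\rho(Y^2)\) of \(([0,\infty),\le)\). *)

(* Defs.v *)
From HB Require Import structures.
From mathcomp Require Import all_boot all_order all_algebra all_fingroup.
From mathcomp Require Import boolp classical_sets functions cardinality.
From mathcomp Require Import Rstruct.
From Stdlib Require Import Rdefinitions.
Set Implicit Arguments. Unset Strict Implicit. Unset Printing Implicit Defensive.
Import Order.TTheory.
Local Open Scope classical_set_scope.
Local Open Scope order_scope.

Section OrderTopology.
Context {disp : Order.disp_t} {Q : orderType disp}.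

Definition order_subbase : set (set Q) :=
  [set S | exists a : Q, S = [set q | q < a] \/ S = [set q | a < q]].

Definition order_open (U : set Q) : Prop :=
  forall x, U x -> exists s : seq (set Q),
    (forall S, S \in s -> order_subbase S) /\
    (forall S, S \in s -> S x) /\
    (forall y, (forall S, S \in s -> S y) -> U y).

Definition order_topology_second_countable : Prop :=
  exists B : set (set Q), countable B /\
    (forall b, B b -> order_open b) /\
    (forall U, order_open U -> forall x, U x -> exists b, [/\ B b, b x & b `<=` U]).

Definition Q_pseudoultrametric (q0 : Q) (X : Type) (d : X -> X -> Q) : Prop :=
  [/\ (exists x : X, True),
      (forall x y, d x y = d y x),
      (forall x, d x x = q0) &
      (forall t : 'I_3 -> X, exists s : 'S_3,
          d (t (s (inord 0))) (t (s (inord 2))) <= d (t (s (inord 0))) (t (s (inord 1))) /\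
          d (t (s (inord 0))) (t (s (inord 1))) = d (t (s (inord 1))) (t (s (inord 2))))].

Definition comb_similar (X Y : Type) (d : X -> X -> Q) (rho : Y -> Y -> R) : Prop :=
  exists (h : X -> Y) (f : Q -> R),
    [/\ bijective h,
        set_bij [set d x y | x in setT & y in setT] [set rho u v | u in setT & v in setT] f &
        forall x y, rho (h x) (h y) = f (d x y)].

Definition weak_similar (X Y : Type) (d : X -> X -> Q) (rho : Y -> Y -> R) : Prop :=
  exists (h : X -> Y) (f : Q -> R),
    [/\ bijective h,
        set_bij [set d x y | x in setT & y in setT] [set rho u v | u in setT & v in setT] f,
        (forall a b, [set d x y | x in setT & y in setT] a ->
                     [set d x y | x in setT & y in setT] b ->
                     (a <= b) <-> (f a <= f b)%R) &
        forall x y, rho (h x) (h y) = f (d x y)].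

End OrderTopology.

Definition pseudoultrametric (Z : Type) (rho : Z -> Z -> R) : Prop :=
  [/\ (forall x y, (0 <= rho x y)%R),
      (forall x y, rho x y = rho y x),
      (forall x, rho x x = 0%R) &
      (forall x y z, (rho x y <= Num.max (rho x z) (rho z y))%R)].

(* Main.v *)
Require Import Defs.
From mathcomp Require Import all_boot all_order all_algebra all_fingroup.
From mathcomp Require Import boolp classical_sets functions cardinality Rstruct reals.
From Stdlib Require Import Rdefinitions Reals Lra.
Import Order.TTheory.
Local Open Scope order_scope.
Local Open Scope classical_set_scope.

Lemma three_case (disp : Order.disp_t) (Q : orderType disp) (A B C : Q) :
  A <= C \/ A <= B -> B <= A \/ B <= C -> C <= A \/ C <= B ->
  (A = B /\ C <= A) \/ (A = C /\ B <= A) \/ (B = C /\ A <= B).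
Proof.
have T := @le_trans _ Q.
have E : forall x y : Q, x <= y -> y <= x -> x = y.
  by move=> x y h1 h2; apply/le_anti; rewrite h1 h2.
case=> h1; case=> h2; case=> h3;
first [ left; split; [apply: E|]; by eauto
      | right; left; split; [apply: E|]; by eauto
      | right; right; split; [apply: E|]; by eauto ].
Qed.

Lemma ternary_of_ultra (disp : Order.disp_t) (Q : orderType disp) (X : Type)
  (d : X -> X -> Q) : (forall x y, d x y = d y x) ->
  (forall x y z, d x y <= d x z \/ d x y <= d z y) ->
  forall t : 'I_3 -> X, exists s : 'S_3,
          d (t (s (inord 0))) (t (s (inord 2))) <= d (t (s (inord 0))) (t (s (inord 1))) /\
          d (t (s (inord 0))) (t (s (inord 1))) = d (t (s (inord 1))) (t (s (inord 2))).
Proof.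
move=> dsym ultra t.
have n01 : (inord 0 : 'I_3) != inord 1.
  by apply/eqP => /(congr1 (@nat_of_ord 3)); rewrite !inordK.
have n02 : (inord 0 : 'I_3) != inord 2.
  by apply/eqP => /(congr1 (@nat_of_ord 3)); rewrite !inordK.
have n12 : (inord 1 : 'I_3) != inord 2.
  by apply/eqP => /(congr1 (@nat_of_ord 3)); rewrite !inordK.
set a := t (inord 0); set b := t (inord 1); set c := t (inord 2).
have u1 := ultra a b c; have u2 := ultra b c a; have u3 := ultra a c b.
rewrite (dsym c b) in u1; rewrite (dsym b a) in u2;
case: (@three_case _ _ _ _ _ u1 u2 u3) => [[e h]|[[e h]|[e h]]].
- by exists 1%g; rewrite !perm1.
- exists (tperm (inord 0) (inord 1)); rewrite tpermL tpermR (tpermD n02 n12).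
  by rewrite -/a -/b -/c (dsym b a); split.
- exists (tperm (inord 1) (inord 2)).  rewrite tpermL tpermR (tpermD _ _); last 2 first.
  by rewrite eq_sym. by rewrite eq_sym.
  rewrite -/a -/b -/c.
  by rewrite (dsym c b) -e.
Qed.

Lemma ultra_of_ternary (disp : Order.disp_t) (Q : orderType disp) (q0 : Q) (X : Type)
  (d : X -> X -> Q) : Q_pseudoultrametric q0 d ->
  forall x y z, d x y <= d x z \/ d x y <= d z y.
Proof.
case=> _ dsym _ tern x y z.
have [s [H1 H2]] := tern (fun i : 'I_3 => nth x [:: x; y; z] (val i)).
have n01 : s (inord 0) != s (inord 1).
  by rewrite (inj_eq perm_inj); apply/eqP => /(congr1 (@nat_of_ord 3)); rewrite !inordK.
have n02 : s (inord 0) != s (inord 2).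
  by rewrite (inj_eq perm_inj); apply/eqP => /(congr1 (@nat_of_ord 3)); rewrite !inordK.
have n12 : s (inord 1) != s (inord 2).
  by rewrite (inj_eq perm_inj); apply/eqP => /(congr1 (@nat_of_ord 3)); rewrite !inordK.
move: n01 n02 n12 H1 H2.
move: (s (inord 0)) (s (inord 1)) (s (inord 2)) => i0 i1 i2.
case: i0 => [[|[|[|?]]] ?] //; case: i1 => [[|[|[|?]]] ?] //;
case: i2 => [[|[|[|?]]] ?] //= _ _ _ H1 H2;
rewrite ?(dsym y x) ?(dsym z x) ?(dsym z y) in H1 H2 *;
first [ by left; rewrite ?H2 ?lexx | by right; rewrite ?H2 ?lexx
      | by left; rewrite -?H2 ?lexx | by right; rewrite -?H2 ?lexx ].
Qed.

Section Main.
Variables (disp : Order.disp_t) (Q : orderType disp) (q0 : Q).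
Hypothesis hq0 : forall q : Q, q0 <= q.

Definition embeds := exists g : Q -> R, forall p q, p < q -> (g p < g q)%R.

Lemma comb_embed :
  (forall (X : Type) (d : X -> X -> Q), Q_pseudoultrametric q0 d ->
         exists (Y : Type) (rho : Y -> Y -> R), pseudoultrametric rho /\ comb_similar d rho) ->
  embeds.
Proof.
move=> H3.
pose d := fun p q : Q => if p == q then q0 else Order.max p q.
have dsym : forall x y, d x y = d y x.
  by move=> x y; rewrite /d eq_sym maxC.
have ultra : forall x y z, d x y <= d x z \/ d x y <= d z y.
  move=> x y z.
  case: (eqVneq x y) => [<-|nxy]; first by left; rewrite /d eqxx hq0.
  case: (eqVneq x z) => [<-|nxz]; first by right; rewrite lexx.
  case: (eqVneq z y) => [->|nzy]; first by left; rewrite lexx.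
  rewrite /d (negbTE nxy) (negbTE nxz) (negbTE nzy).
  have : Order.max x y <= Order.max (Order.max x z) (Order.max z y).
    by rewrite ge_max !le_max !lexx ?orbT ?orTb.
  by rewrite le_max => /orP[]; [left|right].
have pum : Q_pseudoultrametric q0 d.
  split; [by exists q0 | exact: dsym | by move=> x; rewrite /d eqxx |].
  exact: ternary_of_ultra.
have [Y [rho [[r0 rsym rxx rult] [h [f [_ [_ finj _] hf]]]]]] := H3 _ _ pum.
have dq0 : forall q, d q0 q = q.
  move=> q; rewrite /d; case: eqP => // _; exact: max_r.
have allA : forall q, [set d x y | x in setT & y in setT] q.
  by move=> q; exists q0 => //; exists q => //.
have finj' : forall a b, f a = f b -> a = b.
  by move=> a b; apply: finj; rewrite in_setE; apply: allA.
exists f => p q pq.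
have fp : f p = rho (h q0) (h p) by rewrite hf dq0.
have fq : f q = rho (h q0) (h q) by rewrite hf dq0.
have fqp : f q = rho (h q) (h p).
  by rewrite hf /d (gt_eqF pq) max_l // ltW.
have le : (f p <= f q)%R.
  by have := rult (h q0) (h p) (h q); rewrite -fp -fq -fqp maxxx.
case: (Rle_lt_or_eq_dec _ _ le) => // /finj' epq.
by move: pq; rewrite epq ltxx.
Qed.

Lemma embed_weak : embeds ->
  forall (X : Type) (d : X -> X -> Q), Q_pseudoultrametric q0 d ->
         exists (Y : Type) (rho : Y -> Y -> R), pseudoultrametric rho /\ weak_similar d rho.
Proof.
move=> [g gmono] X d pum.
pose g' q := (g q - g q0)%R.
have gle : forall p q, p <= q -> (g' p <= g' q)%R.
  move=> p q; rewrite le_eqVlt => /orP[/eqP->|/gmono]; rewrite /g'; lra.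
have gle_inv : forall p q, (g' p <= g' q)%R -> p <= q.
  move=> p q; rewrite /g' => h; case: leP => // /gmono; lra.
have ginj : forall p q, g' p = g' q -> p = q.
  by move=> p q e; apply/le_anti; rewrite !gle_inv // e; apply: Rle_refl.
have ultra := @ultra_of_ternary _ _ _ _ _ pum.
case: pum => _ dsym dxx _.
exists X, (fun x y => g' (d x y)); split.
  split.
  - by move=> x y; have := gle _ _ (hq0 (d x y)); rewrite /g'; lra.
  - by move=> x y; rewrite dsym.
  - by move=> x; rewrite dxx /g'; lra.
  - move=> x y z; apply/RleP; rewrite le_max; apply/orP.
    by case: (ultra x y z) => h; [left|right]; apply/RleP; apply: gle.
exists (@id X), g'; split.
- by exists (@id X).
- split.
  + by move=> a [x _ [y _ <-]]; exists x => //; exists y.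
  + by move=> a b _ _; apply: ginj.
  + by move=> r [u _ [v _ <-]]; exists (d u v) => //; exists u => //; exists v.
- by move=> a b _ _; split; [apply: gle | apply: gle_inv].
- by [].
Qed.

Fixpoint Ssum (ind : nat -> R) (N : nat) : R :=
  match N with O => 0%R | S N => (Ssum ind N + ind N)%R end.

Lemma sc_embed : order_topology_second_countable (Q := Q) -> embeds.
Proof.
move=> [B [cB [Bopen Bbase]]].
have [f finj] := countable_injP _ cB.
pose U n q := exists b, [/\ B b, f b = n & exists y, b y /\ y <= q].
pose w n := ((/ 2) ^ (S n))%R.
have wpos : forall n, (0 < w n)%R by move=> n; apply: pow_lt; lra.
pose ind n q := if pselect (U n q) then w n else 0%R.
have ind_ge0 : forall n q, (0 <= ind n q)%R.
  by move=> n q; rewrite /ind; case: (pselect (U n q)) => ? /=; [apply: Rlt_le|apply: Rle_refl].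
have ind_le : forall n q, (ind n q <= w n)%R.
  by move=> n q; rewrite /ind; case: (pselect (U n q)) => ? /=; [apply: Rle_refl|apply: Rlt_le].
have Umono : forall n p q, p <= q -> U n p -> U n q.
  move=> n p q pq [b [Bb fb [y [hby yp]]]]; exists b; split => //; exists y; split => //.
  exact: le_trans pq.
have indmono : forall n p q, p <= q -> (ind n p <= ind n q)%R.
  move=> n p q pq; rewrite /ind; case: (pselect (U n p)) => h1; case: (pselect (U n q)) => h2 /=.
  - exact: Rle_refl.
  - by case: h2; apply: Umono h1.
  - by apply: Rlt_le.
  - exact: Rle_refl.
pose S q N := Ssum (fun n => ind n q) N.
have Sbound : forall q N, (S q N + (/ 2) ^ N <= 1)%R.
  move=> q; elim=> [|N IH]; rewrite /S /=; first lra.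
  have := ind_le N q; rewrite /w /=; rewrite /S in IH; lra.
have Sincr : forall q N k, (S q N <= S q (addn N k))%R.
  move=> q N; elim=> [|k IH]; first by rewrite addn0; apply: Rle_refl.
  rewrite addnS /S /=; have := ind_ge0 (addn N k) q; rewrite /S in IH; lra.
have Smono : forall p q N, p <= q -> (S p N <= S q N)%R.
  move=> p q N pq; elim: N => [|N IH]; rewrite /S /=; first lra.
  have := indmono N _ _ pq; rewrite /S in IH; lra.
pose E q := [set S q N | N in [set: nat]].
have Ehas : forall q, has_sup (E q).
  move=> q; split; first by exists (S q 0); exists 0.
  exists 1%R => _ [N _ <-]; apply/RleP; have := Sbound q N.
  have := pow_lt (/ 2) N; lra.
exists (fun q => sup (E q)) => p q pq.
pose V := [set z | p < z].
have Vopen : order_open V.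
  move=> x Vx; exists [:: V]; split; [|split].
  - by move=> S0; rewrite inE => /eqP ->; exists p; right.
  - by move=> S0; rewrite inE => /eqP ->.
  - by move=> y; apply; rewrite inE.
have [b [Bb bq bV]] := Bbase V Vopen q pq.
pose m := f b.
have Umq : U m q by exists b; split => //; exists q; split.
have Ump : ~ U m p.
  move=> [b' [Bb' fb' [y [b'y yp]]]].
  have eb : b' = b by apply: finj; rewrite ?in_setE.
  by move: b'y; rewrite eb => /bV; rewrite /V /= ltNge yp.
have indq : ind m q = w m by rewrite /ind; case: (pselect (U m q)).
have indp : ind m p = 0%R by rewrite /ind; case: (pselect (U m p)).
have Sgap : forall N, (leq m.+1 N) -> (S p N + w m <= S q N)%R.
  elim=> [//|N IH]; rewrite ltnS leq_eqVlt => /orP[/eqP <-|mN].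
    rewrite /S /= -/(S p m) -/(S q m) indq indp.
    have := Smono _ _ m (ltW pq); lra.
  have := IH mN; have := indmono N _ _ (ltW pq); rewrite /S /=; lra.
have supq := sup_upper_bound (Ehas q).
have : (sup (E p) <= sup (E q) - w m)%R.
  apply/RleP; apply: ge_sup; first by exists (S p 0); exists 0.
  move=> _ [N _ <-]; apply/RleP.
  have h1 := Sincr p N m.+1.
  have h2 : (S p (addn N m.+1) + w m <= S q (addn N m.+1))%R by apply: Sgap; rewrite leq_addl.
  have h3 : (S q (addn N m.+1) <= sup (E q))%R.
    by apply/RleP; apply: supq; exists (addn N m.+1).
  lra.
have := wpos m; lra.
Qed.

Definition KK := ((rat * rat) + (rat + rat))%type.

Lemma embed_sc : embeds -> order_topology_second_countable (Q := Q).
Proof.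
move=> [g gmono].
have gle : forall u v, u <= v -> (g u <= g v)%R.
  move=> u v; rewrite le_eqVlt => /orP[/eqP->|/gmono]; lra.
have glt_inv : forall u v, (g u < g v)%R -> u < v.
  move=> u v h; case: leP => // /gle; lra.
have dense : forall x y : R, (x < y)%R -> exists r : rat, (x < ratr r)%R /\ (ratr r < y)%R.
  move=> x y /RltP xy; have [r] := rat_in_itvoo xy.
  by rewrite in_itv /= => /andP[/RltP h1 /RltP h2]; exists r.
pose c (k : KK) : Q := match k with
 | inl (r, s) => xget q0 [set q | (ratr r < g q)%R /\ (g q < ratr s)%R]
 | inr (inl r) => xget q0 [set q | (g q < ratr r)%R /\ forall q', (g q' < ratr r)%R -> q' <= q]
 | inr (inr r) => xget q0 [set q | (ratr r < g q)%R /\ forall q', (ratr r < g q')%R -> q <= q']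
 end.
have lower : forall a x, a < x -> exists k, a <= c k /\ c k < x.
  move=> a x ax; case: (pselect (exists y, a < y /\ y < x)) => [[y [ay yx]]|nE].
    have [r [r1 r2]] := dense _ _ (gmono _ _ ay).
    have [s [s1 s2]] := dense _ _ (gmono _ _ yx).
    exists (inl (r, s)).
    have [h1 h2] : (ratr r < g (c (inl (r, s))))%R /\ (g (c (inl (r, s))) < ratr s)%R.
      have hex : exists q, (ratr r < g q)%R /\ (g q < ratr s)%R by exists y; lra.
      exact: (xgetPex q0 hex).
    split; [apply/ltW/glt_inv|apply/glt_inv]; lra.
  have [r [r1 r2]] := dense _ _ (gmono _ _ ax).
  have H : forall q', (g q' < ratr r)%R -> q' <= a.
    move=> q' h; case: (leP q' a) => // aq'; case: (leP x q') => [/gle|q'x]; first lra.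
    by case: nE; exists q'.
  exists (inr (inl r)).
  have [h1 h2] : (g (c (inr (inl r))) < ratr r)%R /\
      forall q', (g q' < ratr r)%R -> q' <= c (inr (inl r)).
    have hex : exists q, (g q < ratr r)%R /\ forall q', (g q' < ratr r)%R -> q' <= q.
      by exists a; split.
    exact: (xgetPex q0 hex).
  split; first by apply: h2.
  exact: le_lt_trans (H _ h1) ax.
have upper : forall x b, x < b -> exists k, x < c k /\ c k <= b.
  move=> x b xb; case: (pselect (exists y, x < y /\ y < b)) => [[y [xy yb]]|nE].
    have [r [r1 r2]] := dense _ _ (gmono _ _ xy).
    have [s [s1 s2]] := dense _ _ (gmono _ _ yb).
    exists (inl (r, s)).
    have [h1 h2] : (ratr r < g (c (inl (r, s))))%R /\ (g (c (inl (r, s))) < ratr s)%R.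
      have hex : exists q, (ratr r < g q)%R /\ (g q < ratr s)%R by exists y; lra.
      exact: (xgetPex q0 hex).
    split; [apply/glt_inv|apply/ltW/glt_inv]; lra.
  have [r [r1 r2]] := dense _ _ (gmono _ _ xb).
  have H : forall q', (ratr r < g q')%R -> b <= q'.
    move=> q' h; case: (leP b q') => // q'b; case: (leP q' x) => [/gle|xq']; first lra.
    by case: nE; exists q'.
  exists (inr (inr r)).
  have [h1 h2] : (ratr r < g (c (inr (inr r))))%R /\
      forall q', (ratr r < g q')%R -> c (inr (inr r)) <= q'.
    have hex : exists q, (ratr r < g q)%R /\ forall q', (ratr r < g q')%R -> q <= q'.
      by exists b; split.
    exact: (xgetPex q0 hex).
  split; last by apply: h2.
  exact: lt_le_trans xb (H _ h1).
pose G (l : seq KK * seq KK) : set Q :=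
  [set q | (forall k, k \in l.1 -> c k < q) /\ (forall k, k \in l.2 -> q < c k)].
have Gopen : forall l, order_open (G l).
  move=> l x Gx.
  exists (map (fun k => [set q | c k < q]) l.1 ++ map (fun k => [set q | q < c k]) l.2).
  split; [|split].
  - move=> S0; rewrite mem_cat => /orP[/mapP[k _ ->]|/mapP[k _ ->]]; exists (c k).
      by right.
    by left.
  - move=> S0; rewrite mem_cat => /orP[/mapP[k kl ->]|/mapP[k kl ->]] /=.
      exact: Gx.1.
    exact: Gx.2.
  - move=> y H; split => k kl.
      by apply: (H [set q | c k < q]); rewrite mem_cat; apply/orP; left; apply/mapP; exists k.
    by apply: (H [set q | q < c k]); rewrite mem_cat; apply/orP; right; apply/mapP; exists k.
exists (G @` setT); split; [|split].
- by apply: sub_countable (card_image_le G setT) _; exact: countableP.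
- by move=> _ [l _ <-]; apply: Gopen.
move=> U Uopen x Ux.
have [s [sub [mem all]]] := Uopen x Ux.
suff [l [Gx Gs]] : exists l, G l x /\ forall y, G l y -> forall S0, S0 \in s -> S0 y.
  exists (G l); split; [by exists l | by [] | ].
  by move=> y /Gs; apply: all.
elim: s sub mem {all} => [|S s IH] sub mem.
  by exists ([::], [::]); split => //; split.
have [l [Gx Gs]] : exists l, G l x /\ forall y, G l y -> forall S0, S0 \in s -> S0 y.
  apply: IH => S0 S0s; [apply: sub|apply: mem]; by rewrite in_cons S0s orbT.
have Sx : S x by apply: mem; rewrite in_cons eqxx.
have [a [eS|eS]] : order_subbase S by apply: sub; rewrite in_cons eqxx.
- have xa : x < a by move: Sx; rewrite eS.
  have [k [xk ka]] := upper x a xa.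
  exists (l.1, k :: l.2); split.
    split; first exact: Gx.1.
    by move=> k'; rewrite in_cons => /orP[/eqP->|]; [|apply: Gx.2].
  move=> y [Gy1 Gy2] S0; rewrite in_cons => /orP[/eqP->|S0s].
    rewrite eS /=; apply: lt_le_trans ka; apply: Gy2; exact: mem_head.
  apply: Gs S0s; split => // k' k'l; apply: Gy2; by rewrite in_cons k'l orbT.
- have ax : a < x by move: Sx; rewrite eS.
  have [k [ak kx]] := lower a x ax.
  exists (k :: l.1, l.2); split.
    split; last exact: Gx.2.
    by move=> k'; rewrite in_cons => /orP[/eqP->|]; [|apply: Gx.1].
  move=> y [Gy1 Gy2] S0; rewrite in_cons => /orP[/eqP->|S0s].
    rewrite eS /=; apply: le_lt_trans ak _; apply: Gy1; exact: mem_head.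
  apply: Gs S0s; split => // k' k'l; apply: Gy1; by rewrite in_cons k'l orbT.
Qed.
End Main.

Theorem theorem4p18 (disp : Order.disp_t) (Q : orderType disp) (q0 : Q)
  (hq0 : forall q : Q, q0 <= q) (hcard : exists a b : Q, a != b) :
  [<-> order_topology_second_countable (Q := Q);
       forall (X : Type) (d : X -> X -> Q), Q_pseudoultrametric q0 d ->
         exists (Y : Type) (rho : Y -> Y -> R), pseudoultrametric rho /\ weak_similar d rho;
       forall (X : Type) (d : X -> X -> Q), Q_pseudoultrametric q0 d ->
         exists (Y : Type) (rho : Y -> Y -> R), pseudoultrametric rho /\ comb_similar d rho].
Proof.
split; [|split].
- by move=> H; apply: (@embed_weak _ _ _ hq0); apply: (@sc_embed _ _ H).
- move=> H2 X d pum; have [Y [rho [pr [h [f [hb fb _ hf]]]]]] := H2 X d pum.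
  by exists Y, rho; split => //; exists h, f; split.
- by move=> H3; apply: (@embed_sc _ _ q0); apply: (@comb_embed _ _ _ hq0).
Qed.
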